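(* If a closed-loop DT model $\bar F:\mathbb{R}^n\times(0,\infty)\to\mathbb{R}^n$ is SLES-VSR, then it is SS-VSR.
   Context: Solutions: $x_{k+1}=\bar F(x_k,T_k)$. $\Phi(T)$: set of sequences $\{T_i\}_{i\ge0}$ with $T_i\in(0,T)$; $\sum_{i=0}^{-1}T_i=0$. $\mathcal{KL}$: $\beta:\mathbb{R}_{\ge0}^2\to\mathbb{R}_{\ge0}$, continuous strictly increasing with $\beta(0,t)=0$ in the first argument, strictly decreasing to $0$ in the second. SPS-VSR: there is $\beta\in\mathcal{KL}$ such that for every $M\ge0$, $R>0$ there is $T^\star(M,R)>0$ with $|x_k|\le\beta(|x_0|,\sum_{i=0}^{k-1}T_i)+R$ for all $k\in\mathbb{N}_0$, $\{T_i\}\in\Phi(T^\star)$, $|x_0|\le M$. LES-VSR: there exist $K\ge1$, $R,T^\star,\lambda>0$ with $|x_k|\le K|x_0|e^{-\lambda\sum_{i=0}^{k-1}T_i}$ for all $k$, $\{T_i\}\in\Phi(T^\star)$, $|x_0|\le R$. SLES-VSR: SPS-VSR and LES-VSR. SS-VSR: there is $\beta\in\mathcal{KL}$ such that for every $M\ge0$ there is $T^\star(M)>0$ with $|x_k|\le\beta(|x_0|,\sum_{i=0}^{k-1}T_i)$ for all $k\in\mathbb{N}_0$, $\{T_i\}\in\Phi(T^\star)$, $|x_0|\le M$. *)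

(* Defs.v *)
From HB Require Import structures.
From mathcomp Require Import all_boot all_order all_algebra.
From mathcomp Require Import all_classical all_reals all_analysis.
Set Implicit Arguments. Unset Strict Implicit. Unset Printing Implicit Defensive.
Import Order.TTheory GRing.Theory Num.Theory numFieldNormedType.Exports.
Local Open Scope ring_scope.
Local Open Scope classical_set_scope.

Definition enorm {R : realType} {n : nat} (x : 'rV[R]_n) : R :=
  Num.sqrt (\sum_(i < n) x 0 i ^+ 2).

Fixpoint sol {R : realType} {n : nat} (F : 'rV[R]_n -> R -> 'rV[R]_n)
  (x0 : 'rV[R]_n) (T : nat -> R) (k : nat) : 'rV[R]_n :=
  match k with
  | 0 => x0
  | k'.+1 => F (sol F x0 T k') (T k')
  end.

Definition tsum {R : realType} (T : nat -> R) (k : nat) : R := \sum_(i < k) T i.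

Definition Phi {R : realType} (Ts : R) (T : nat -> R) : Prop :=
  forall i, 0 < T i < Ts.

Definition classKL {R : realType} (beta : R -> R -> R) : Prop :=
  (forall s t : R, 0 <= s -> 0 <= t -> 0 <= beta s t) /\
  (forall t : R, 0 <= t -> beta 0 t = 0) /\
  (forall t : R, 0 <= t ->
     {within [set s : R | 0 <= s], continuous (fun s : R => beta s t)}) /\
  (forall t s1 s2 : R, 0 <= t -> 0 <= s1 -> s1 < s2 -> beta s1 t < beta s2 t) /\
  (forall s t1 t2 : R, 0 < s -> 0 <= t1 -> t1 < t2 -> beta s t2 < beta s t1) /\
  (forall s : R, 0 <= s -> (fun t : R => beta s t) @ +oo --> (0 : R)).

Definition SPS_VSR {R : realType} {n : nat} (F : 'rV[R]_n -> R -> 'rV[R]_n) : Prop :=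
  exists beta, classKL beta /\
  forall M Rr : R, 0 <= M -> 0 < Rr -> exists Ts : R, 0 < Ts /\
    forall (k : nat) (T : nat -> R) (x0 : 'rV[R]_n), Phi Ts T -> enorm x0 <= M ->
      enorm (sol F x0 T k) <= beta (enorm x0) (tsum T k) + Rr.

Definition LES_VSR {R : realType} {n : nat} (F : 'rV[R]_n -> R -> 'rV[R]_n) : Prop :=
  exists K Rr Ts lam : R, 1 <= K /\ 0 < Rr /\ 0 < Ts /\ 0 < lam /\
    forall (k : nat) (T : nat -> R) (x0 : 'rV[R]_n), Phi Ts T -> enorm x0 <= Rr ->
      enorm (sol F x0 T k) <= K * enorm x0 * expR (- (lam * tsum T k)).

Definition SLES_VSR {R : realType} {n : nat} (F : 'rV[R]_n -> R -> 'rV[R]_n) : Prop :=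
  SPS_VSR F /\ LES_VSR F.

Definition SS_VSR {R : realType} {n : nat} (F : 'rV[R]_n -> R -> 'rV[R]_n) : Prop :=
  exists beta, classKL beta /\
  forall M : R, 0 <= M -> exists Ts : R, 0 < Ts /\
    forall (k : nat) (T : nat -> R) (x0 : 'rV[R]_n), Phi Ts T -> enorm x0 <= M ->
      enorm (sol F x0 T k) <= beta (enorm x0) (tsum T k).

(* Main.v *)
Require Import Defs.
From HB Require Import structures.
From mathcomp Require Import all_boot all_order all_algebra.
From mathcomp Require Import all_classical all_reals all_analysis.
From mathcomp Require Import ring lra.
Set Implicit Arguments. Unset Strict Implicit. Unset Printing Implicit Defensive.
Import Order.TTheory GRing.Theory Num.Theory numFieldNormedType.Exports.
Local Open Scope ring_scope.
Local Open Scope classical_set_scope.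

Section Phi.
Variable R : realType.
Variable a : nat -> R.
Hypothesis a_ge0 : forall j, 0 <= a j.

Definition hj (j : nat) (s : R) := (s - j%:R) + `|s - j%:R|.
Definition PP (N : nat) (s : R) := \sum_(j < N) a j * hj j s.

Lemma hj_ge0 j s : 0 <= hj j s.
Proof. rewrite /hj; have := ler_norm (- (s - j%:R)); rewrite normrN; lra. Qed.

Lemma hj_le j s : s <= j%:R -> hj j s = 0.
Proof. move=> h; rewrite /hj ler0_norm ?subrr // subr_le0 //. Qed.

Lemma hj_ge j s : j%:R <= s -> hj j s = 2 * (s - j%:R).
Proof. move=> h; rewrite /hj ger0_norm ?subr_ge0 //; lra. Qed.

Lemma hj_mono j s1 s2 : s1 <= s2 -> hj j s1 <= hj j s2.
Proof.
move=> le12; have [h1|h1] := lerP s1 j%:R.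
  by rewrite hj_le // hj_ge0.
rewrite !hj_ge ?(ltW h1) ?(le_trans (ltW h1)) //.
by rewrite ler_pM2l // lerB.
Qed.

Lemma hj_cont j : continuous (hj j).
Proof.
move=> x; apply: cvgD; first by apply: cvgB; [exact: cvg_id | exact: cvg_cst].
by apply: cvg_norm; apply: cvgB; [exact: cvg_id | exact: cvg_cst].
Qed.

Lemma PP_ge0 N s : 0 <= PP N s.
Proof. by apply: sumr_ge0 => j _; rewrite mulr_ge0 // hj_ge0. Qed.

Lemma PP_mono N s1 s2 : s1 <= s2 -> PP N s1 <= PP N s2.
Proof. by move=> h; apply: ler_sum => j _; rewrite ler_wpM2l // hj_mono. Qed.

Lemma PP_stab N N' s : s <= N%:R -> (N <= N')%N -> PP N' s = PP N s.
Proof.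
move=> hs; elim: N' => [|N' IH]; first by rewrite leqn0 => /eqP ->.
rewrite leq_eqVlt => /orP [/eqP <- //|]; rewrite ltnS => hN.
rewrite /PP big_ord_recr /= -/(PP N' s) IH // hj_le ?mulr0 ?addr0 //.
by rewrite (le_trans hs) // ler_nat.
Qed.

Lemma PP0 s : PP 0 s = 0. Proof. by rewrite /PP big_ord0. Qed.
Lemma PPS N s : PP N.+1 s = PP N s + a N * hj N s.
Proof. by rewrite /PP big_ord_recr. Qed.

Lemma PP_cont N : continuous (PP N).
Proof.
elim: N => [|N IH].
  have -> : PP 0 = fun=> 0 by apply/funext => s; rewrite PP0.
  by move=> x; exact: cvg_cst.
have -> : PP N.+1 = (fun s => PP N s + a N * hj N s) by apply/funext => s; rewrite PPS.
move=> x; apply: cvgD; first exact: IH.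
by apply: cvgM; [exact: cvg_cst | exact: hj_cont].
Qed.

Lemma PP_low N j s : (j < N)%N -> a j * hj j s <= PP N s.
Proof.
move=> hj; rewrite /PP (bigD1 (Ordinal hj)) //= lerDl.
by apply: sumr_ge0 => i _; rewrite mulr_ge0 // hj_ge0.
Qed.

Variable c : R.
Hypothesis c_gt0 : 0 < c.

Definition NN (s : R) := (Num.truncn `|s|).+1.
Definition phi (s : R) := c * s + PP (NN s) s.

Lemma NN_ge s : s <= (NN s)%:R.
Proof. apply: (le_trans (ler_norm s)); apply: ltW; exact: truncnS_gt. Qed.

Lemma phi_eq N s : s <= N%:R -> phi s = c * s + PP N s.
Proof.
move=> hN; rewrite /phi; congr (_ + _).
rewrite -(PP_stab (N:=NN s) (N':=maxn N (NN s))) ?NN_ge ?leq_maxr //.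
by rewrite (PP_stab (N:=N)) ?leq_maxl.
Qed.

Lemma phi0 : phi 0 = 0.
Proof.
rewrite (@phi_eq 0) // mulr0 add0r PP0 //.
Qed.

Lemma phi_ge0 s : 0 <= s -> 0 <= phi s.
Proof. by move=> h; apply: addr_ge0; [apply: mulr_ge0=> //; exact: ltW | exact: PP_ge0]. Qed.

Lemma phi_lt s1 s2 : s1 < s2 -> phi s1 < phi s2.
Proof.
move=> h; pose N := maxn (NN s1) (NN s2).
rewrite (@phi_eq N s1) ?(le_trans (NN_ge s1)) ?ler_nat ?leq_maxl //.
rewrite (@phi_eq N s2) ?(le_trans (NN_ge s2)) ?ler_nat ?leq_maxr //.
by rewrite ltr_leD ?ltr_pM2l ?PP_mono ?ltW.
Qed.

Lemma phi_low j s : 0 <= s -> a j * hj j s <= phi s.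
Proof.
move=> hs; pose N := maxn j.+1 (NN s).
rewrite (@phi_eq N s) ?(le_trans (NN_ge s)) ?ler_nat ?leq_maxr //.
apply: (le_trans (PP_low s (leq_maxl j.+1 (NN s)))).
rewrite lerDr; apply: mulr_ge0 => //; exact: ltW.
Qed.

Lemma phi_lin s : 0 <= s -> c * s <= phi s.
Proof. by move=> hs; rewrite /phi lerDl PP_ge0. Qed.

Lemma phi_gt0 s : 0 < s -> 0 < phi s.
Proof. by move=> h; rewrite -phi0 phi_lt. Qed.

Lemma phi_cont : continuous phi.
Proof.
move=> x; pose N := NN (x + 1).
have H : {near x, (fun s => c * s + PP N s) =1 phi}.
  near=> s; rewrite (@phi_eq N) //.
  apply: (le_trans _ (NN_ge (x + 1))).
  near: s; apply: lt_le_nbhsl; lra.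
apply: cvg_trans (near_eq_cvg H) _.
rewrite (@phi_eq N x); last by apply: (le_trans _ (NN_ge (x + 1))); lra.
apply: cvgD; last exact: PP_cont.
by apply: cvgM; [exact: cvg_cst | exact: cvg_id].
Unshelve. all: by end_near.
Qed.

End Phi.

Lemma exp_lim (R : realType) (lam p : R) : 0 < lam -> 0 <= p ->
  (fun t : R => p * expR (- (lam * t))) @ +oo --> (0 : R).
Proof.
move=> hl hp; apply/cvgrPdist_le => e e0; near=> t.
rewrite sub0r normrN ger0_norm; last by rewrite mulr_ge0 ?expR_ge0.
have h1 := expRxMexpNx_1 (lam * t).
have h2 := expR_ge1Dx (lam * t).
have h3 := expR_gt0 (- (lam * t)).
have ht : p <= e * (lam * t).
  have : p / (e * lam) <= t by near: t; apply: nbhs_pinfty_ge; exact: num_real.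
  rewrite ler_pdivrMr ?mulr_gt0 // => h; rewrite mulrA; apply: (le_trans h).
  by rewrite mulrC.
have h4 : p * expR (- (lam * t)) <= e * (lam * t) * expR (- (lam * t)).
  by apply: ler_wpM2r; [exact: ltW|].
have h5 : e * (lam * t) * expR (- (lam * t)) <= e * (expR (lam * t) - 1) * expR (- (lam * t)).
  by apply: ler_wpM2r; [exact: ltW|]; apply: ler_wpM2l; [exact: ltW|]; lra.
have h6 : e * (expR (lam * t) - 1) * expR (- (lam * t)) = e - e * expR (- (lam * t)).
  by rewrite mulrBr mulr1 mulrBl -mulrA h1 mulr1.
have h7 : 0 <= e * expR (- (lam * t)) by rewrite mulr_ge0 ?ltW.
lra.
Unshelve. all: by end_near.
Qed.

Lemma KL_phi (R : realType) (a : nat -> R) (c lam : R) :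
  (forall j, 0 <= a j) -> 0 < c -> 0 < lam ->
  classKL (fun s t => phi a c s * expR (- (lam * t))).
Proof.
move=> ha hc hl; split; [|split; [|split; [|split; [|split]]]].
- by move=> s t hs ht; rewrite mulr_ge0 ?expR_ge0 ?phi_ge0.
- by move=> t _; rewrite phi0 mul0r.
- move=> t _; apply: continuous_subspaceT => x.
  by apply: cvgM; [exact: phi_cont | exact: cvg_cst].
- move=> t s1 s2 _ _ h; rewrite ltr_pM2r ?expR_gt0 //; exact: phi_lt.
- move=> s t1 t2 hs _ h; rewrite ltr_pM2l ?phi_gt0 // ltr_expR ltrN2 ltr_pM2l //.
- by move=> s hs; apply: exp_lim => //; exact: phi_ge0.
Qed.
Lemma sol_shift (R : realType) n (F : 'rV[R]_n -> R -> 'rV[R]_n) x0 T j i :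
  sol F x0 T (j + i) = sol F (sol F x0 T j) (fun l => T (j + l)) i.
Proof. elim: i => [|i IH]; first by rewrite addn0. by rewrite addnS /= IH. Qed.

Lemma tsumS (R : realType) (T : nat -> R) k : tsum T k.+1 = tsum T k + T k.
Proof. by rewrite /tsum big_ord_recr. Qed.

Lemma tsum0 (R : realType) (T : nat -> R) : tsum T 0 = 0.
Proof. by rewrite /tsum big_ord0. Qed.

Lemma tsum_shift (R : realType) (T : nat -> R) j i :
  tsum T (j + i) = tsum T j + tsum (fun l => T (j + l)) i.
Proof.
elim: i => [|i IH]; first by rewrite addn0 tsum0 addr0.
by rewrite addnS !tsumS IH addrA.
Qed.

Lemma tsum_ge0 (R : realType) (Ts : R) T k : Phi Ts T -> 0 <= tsum T k.
Proof.
move=> hT; elim: k => [|k IH]; first by rewrite tsum0.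
by rewrite tsumS addr_ge0 // ltW //; case/andP: (hT k).
Qed.

Lemma Phi_shift (R : realType) (Ts : R) T j : Phi Ts T -> Phi Ts (fun l => T (j + l)).
Proof. by move=> hT l; exact: hT. Qed.

Lemma enorm_ge0 (R : realType) n (x : 'rV[R]_n) : 0 <= enorm x.
Proof. exact: sqrtr_ge0. Qed.

Lemma KL_mono (R : realType) (beta : R -> R -> R) s m t t' :
  classKL beta -> 0 <= s -> s <= m -> 0 <= t' -> t' <= t -> beta s t <= beta m t'.
Proof.
move=> [_ [h0 [_ [hs [ht _]]]]] s0 sm t0 tt.
apply: (@le_trans _ _ (beta s t')).
  have [->|s0'] := eqVneq s 0; first by rewrite !h0 // (le_trans t0).
  have sp : 0 < s by rewrite lt_neqAle eq_sym s0' s0.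
  move: tt; rewrite le_eqVlt => /orP [/eqP -> //|]; move=> tt.
  by apply: ltW; apply: ht.
move: sm; rewrite le_eqVlt => /orP [/eqP -> //|] sm.
by apply: ltW; apply: hs.
Qed.

Lemma KL_tau (R : realType) (beta : R -> R -> R) (e : R) (s : R) :
  classKL beta -> 0 <= s -> 0 < e ->
  exists tau : R, 0 <= tau /\ forall t, tau <= t -> beta s t <= e.
Proof.
move=> [_ [_ [_ [_ [_ hl]]]]] hs he.
move: (hl s hs) => /cvgrPdist_le /(_ e he) [M [Mr HM]].
exists (Num.max 0 (M + 1)); split; first by rewrite le_max lexx.
move=> t ht; have : M < t by apply: (lt_le_trans _ ht); rewrite lt_max; apply/orP; right; lra.
move/HM; rewrite sub0r normrN => h; exact: (le_trans (ler_norm _) h).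
Qed.

Theorem lemma3 (R : realType) (n : nat) (F : 'rV[R]_n -> R -> 'rV[R]_n) :
  SLES_VSR F -> SS_VSR F.
Proof.
move=> [[beta [hKL hS]] [K [r [TL [lam [hK [hr [hTL [hl hL]]]]]]]]].
have hr2 : 0 < r / 2 by rewrite divr_gt0.
have htau : forall m : nat, exists tau : R,
    0 <= tau /\ forall t, tau <= t -> beta m%:R t <= r / 2.
  by move=> m; apply: KL_tau.
case: (boolp.choice htau) => tau Htau.
pose g (m : nat) := (beta m%:R 0 + r + K * r) * expR (lam * (tau m + 1)).
have hb0 : forall m : nat, 0 <= beta m%:R 0.
  by move=> m; case: hKL => h _; apply: h.
have hg0 : forall m, 0 <= g m.
  move=> m; rewrite mulr_ge0 ?expR_ge0 //.
  have := hb0 m; have : 0 <= K * r by rewrite mulr_ge0 ?ltW //; lra.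
  lra.
pose mr := Num.min 1 r.
have hmr : 0 < mr by rewrite lt_min ltr01 hr.
pose a (j : nat) := (\sum_(i < j.+3) g i) / mr.
have ha : forall j, 0 <= a j.
  by move=> j; apply: divr_ge0; [apply: sumr_ge0 => i _; exact: hg0 | exact: ltW].
pose c := K + 1.
have hc : 0 < c by rewrite /c; lra.
exists (fun s t => phi a c s * expR (- (lam * t))); split.
  exact: KL_phi.
move=> M hM.
case: (hS M (r / 2) hM hr2) => TS [hTS HS].
exists (Num.min TS (Num.min TL 1)); split.
  by rewrite !lt_min hTS hTL ltr01.
move=> k T x0 hT hx0.
have hT1 : Phi TS T.
  move=> i; case/andP: (hT i) => h1; rewrite !lt_min => /andP [h2 _].
  by rewrite h1 h2.
have hT2 : Phi TL T.
  move=> i; case/andP: (hT i) => h1; rewrite !lt_min => /andP [_ /andP [h2 _]].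
  by rewrite h1 h2.
have hT3 : forall i, T i < 1.
  move=> i; case/andP: (hT i) => h1; rewrite !lt_min => /andP [_ /andP [_ h2]].
  exact: h2.
have hs0 := enorm_ge0 x0.
set s := enorm x0 in hs0 hx0 *.
have ht0 : forall j, 0 <= tsum T j by move=> j; exact: tsum_ge0 hT1.
have hE0 := expR_gt0 (- (lam * tsum T k)).
case: (lerP s r) => hsr.
  apply: (le_trans (hL k T x0 hT2 hsr)).
  rewrite -/s; apply: ler_wpM2r; first exact: ltW.
  apply: (le_trans _ (phi_lin ha c hs0)).
  by apply: ler_wpM2r => //; rewrite /c; lra.
pose N := Num.truncn s.
have hN1 : N%:R <= s by rewrite truncn_le.
have hN2 : s < N.+1%:R by exact: truncnS_gt.
pose m := N.+1.
have hgphi : g m <= phi a c s.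
  apply: (le_trans _ (phi_low ha hc N.-1 hs0)).
  have hjs : N.-1%:R <= s.
    by apply: (le_trans _ hN1); rewrite ler_nat leq_pred.
  rewrite hj_ge //.
  have hsj : mr <= s - N.-1%:R.
    have [hN0|hNp] := eqVneq N 0%N.
      rewrite hN0 /= subr0; apply: (le_trans _ (ltW hsr)).
      by rewrite ge_min lexx orbT.
    have e : N%:R = N.-1%:R + 1 :> R by rewrite natr1 prednK // lt0n.
    apply: (@le_trans _ _ 1); first by rewrite ge_min lexx.
    lra.
  have hga : g m <= \sum_(i < N.-1.+3) g i.
    have hmN : (m < N.-1.+3)%N by rewrite /m; case: (N).
    rewrite (bigD1 (Ordinal hmN)) //= lerDl.
    by apply: sumr_ge0 => i _.
  have hA : g m <= a N.-1 * mr.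
    by rewrite /a mulrVK ?unitfE ?gt_eqF //.
  apply: (le_trans hA); apply: ler_wpM2l; first exact: ha.
  lra.
suff : enorm (sol F x0 T k) <= g m * expR (- (lam * tsum T k)).
  move=> h; apply: (le_trans h); apply: ler_wpM2r => //; exact: ltW.
have hsm : s <= m%:R by exact: ltW.
have [tau0 Htau1] := Htau m.
have hexp1 : forall u, u <= tau m + 1 ->
    expR (lam * u) <= expR (lam * (tau m + 1)).
  by move=> u hu; rewrite ler_expR ler_pM2l.
rewrite /g -mulrA.
case: (lerP (tsum T k) (tau m + 1)) => htk.
  have h1 := HS k T x0 hT1 hx0.
  have h2 : beta s (tsum T k) <= beta m%:R 0 := KL_mono hKL hs0 hsm (lexx 0) (ht0 k).
  have h3 : 1 <= expR (lam * (tau m + 1)) * expR (- (lam * tsum T k)).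
    rewrite -expRD; apply: (le_trans _ (expR_ge1Dx _)).
    rewrite lerDl subr_ge0; apply: ler_wpM2l; [exact: ltW | exact: htk].
  have h4 : 0 <= K * r by rewrite mulr_ge0 ?ltW //; lra.
  have h5 := hb0 m.
  rewrite -/s in h1.
  apply: (le_trans h1); apply: (@le_trans _ _ ((beta m%:R 0 + r + K * r) * 1)).
    rewrite mulr1; lra.
  by apply: ler_wpM2l; [lra | exact: h3].
pose P := fun j => (tau m <= tsum T j)%R.
have exP : exists j, P j by exists k; rewrite /P; apply: ltW; lra.
case: (ex_minnP exP) => j0 hPj0 hmin.
have hj0k : (j0 <= k)%N by apply: hmin; rewrite /P; apply: ltW; lra.
have hj0t : tsum T j0 <= tau m + 1.
  move: hmin hPj0; case: (j0) => [|j'] hmin' hPj.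
    by rewrite tsum0; lra.
  have : ~~ P j'.
    apply/negP => hP; have := hmin' j' hP; by rewrite ltnn.
  rewrite /P -ltNge => hlt; rewrite tsumS.
  have := hT3 j'; lra.
have hxj : enorm (sol F x0 T j0) <= r.
  have h1 := HS j0 T x0 hT1 hx0.
  have h2 : beta s (tsum T j0) <= beta m%:R (tsum T j0) :=
    KL_mono hKL hs0 hsm (ht0 j0) (lexx _).
  have h3 := Htau1 _ hPj0.
  rewrite -/s in h1; lra.
have hk : k = (j0 + (k - j0))%N by rewrite subnKC.
have hL' := hL (k - j0)%N (fun l => T (j0 + l)) (sol F x0 T j0) (Phi_shift j0 hT2) hxj.
rewrite -sol_shift -hk in hL'.
have hts := tsum_shift T j0 (k - j0).
rewrite -hk in hts.
apply: (le_trans hL').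
have he : expR (- (lam * tsum (fun l => T (j0 + l)) (k - j0))) =
    expR (lam * tsum T j0) * expR (- (lam * tsum T k)).
  rewrite -expRD hts; congr expR; ring.
rewrite he.
have hK0 : 0 <= K by lra.
have hx0' := enorm_ge0 (sol F x0 T j0).
have h6 := hexp1 _ hj0t.
have h7 : K * enorm (sol F x0 T j0) <= K * r by apply: ler_wpM2l.
have h8 := expR_gt0 (lam * tsum T j0).
have h5 := hb0 m.
have hAE : 0 <= expR (lam * tsum T j0) * expR (- (lam * tsum T k)).
  by rewrite mulr_ge0 ?expR_ge0.
have hBE : 0 <= expR (lam * (tau m + 1)) * expR (- (lam * tsum T k)).
  by rewrite mulr_ge0 ?expR_ge0.
apply: (@le_trans _ _ (K * r * (expR (lam * tsum T j0) * expR (- (lam * tsum T k))))).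
  by apply: ler_wpM2r.
apply: (@le_trans _ _ (K * r * (expR (lam * (tau m + 1)) * expR (- (lam * tsum T k))))).
  apply: ler_wpM2l; first by rewrite mulr_ge0 // ltW.
  by apply: ler_wpM2r => //; rewrite ltW.
apply: ler_wpM2r => //; lra.
Qed.
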